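(* Let $\Sigma=\Sigma_c\,\dot\cup\,\Sigma_{uc}=\Sigma_o\,\dot\cup\,\Sigma_{uo}$ be a finite alphabet, and let $\mathbf{G}=\mathop{\|}_{k\in[1,N]}\mathbf{G}_k$ be the plant, with $L(\mathbf G)$ and $L_m(\mathbf G)$ its closed and marked behaviors. Let the specification be $E=\mathop{\|}_{p\in\mathcal P}E_p$ with $E_p\subseteq\Sigma_{e,p}^*$ and $\Sigma_e=\bigcup_{p}\Sigma_{e,p}$, and let $P_e:\Sigma^*\to\Sigma_e^*$ be the natural projection. For each $p\in\mathcal P$, let $\mathbf G_p=\|\{\mathbf G_k: \Sigma_k\cap\Sigma_{e,p}\neq\emptyset\}$ have alphabet $\Sigma_p\supseteq\Sigma_{e,p}$, and let $P_p:\Sigma^*\to\Sigma_p^*$ be the natural projection. Assume every component is relevant to some specification, so that $$L(\mathbf G)=\bigcap_{p}P_p^{-1}L(\mathbf G_p),\qquad L_m(\mathbf G)=\bigcap_p P_p^{-1}L_m(\mathbf G_p).$$ Assume the following. (H1) For each $p\in\mathcal P$ there is a generator $\mathbf{SUP}_p$ over $\Sigma_p$ (a partial-observation decentralized supervisor) with $$L_m(\mathbf G_p)\cap L_m(\mathbf{SUP}_p)=K_p,\qquad L(\mathbf G_p)\cap L(\mathbf{SUP}_p)=\overline{K_p},$$ where $K_p=\sup\mathcal{CO}(E_p\,\|\,L_m(\mathbf G_p))\subseteq E_p\,\|\,L_m(\mathbf G_p)$. (H2) There are generators $\mathbf{CO}_q$ over alphabets $\Sigma_q\subseteq\Sigma$,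 $q\in\mathcal Q$ (partial-observation coordinators), with natural projections $P_q:\Sigma^*\to\Sigma_q^*$. Define $$L_m(\mathbf{SYS})=L_m(\mathbf G)\cap\bigcap_p P_p^{-1}L_m(\mathbf{SUP}_p)\cap\bigcap_q P_q^{-1}L_m(\mathbf{CO}_q),$$ $$L(\mathbf{SYS})=L(\mathbf G)\cap\bigcap_p P_p^{-1}L(\mathbf{SUP}_p)\cap\bigcap_q P_q^{-1}L(\mathbf{CO}_q).$$ Assume these are nonblocking, i.e. $L(\mathbf{SYS})=\overline{L_m(\mathbf{SYS})}$. (H3) For each $p$ and each $\alpha\in\Sigma_{c,p}:=\Sigma_c\cap\Sigma_p$, there is a partial-observation local controller $\mathbf{LOC}_{\alpha,p}$ for $\alpha$ with alphabet $\Sigma_{\alpha,p}\subseteq\Sigma_p$. These satisfy $$L(\mathbf G_p)\cap\big(\mathop{\|}_{\alpha\in\Sigma_{c,p}}L(\mathbf{LOC}_{\alpha,p})\big)=L(\mathbf G_p)\cap L(\mathbf{SUP}_p),$$ $$L_m(\mathbf G_p)\cap\big(\mathop{\|}_{\alpha\in\Sigma_{c,p}}L_m(\mathbf{LOC}_{\alpha,p})\big)=L_m(\mathbf G_p)\cap L_m(\mathbf{SUP}_p).$$ Similarly, for each $q$ and each $\alpha\in\Sigma_{c,q}:=\Sigma_c\cap\Sigma_q$, there is a partial-observation local controller $\mathbf{LOC}_{\alpha,q}$ with alphabet $\Sigma_{\alpha,q}\subseteq\Sigma_q$. These satisfy $$L(\mathbf G)\cap\bigcap_{\alpha\in\Sigma_{c,q}}P_{\alpha,q}^{-1}L(\mathbf{LOC}_{\alpha,q})=L(\mathbf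 G)\cap P_q^{-1}L(\mathbf{CO}_q),$$ and the analogous identity holds with $L$ replaced by $L_m$ throughout. Here $P_{\alpha,q}:\Sigma^*\to\Sigma_{\alpha,q}^*$ is the natural projection. For each $\alpha\in\Sigma_c$, let $\mathbf{LOC}_\alpha$, with alphabet $\Sigma_\alpha$, be the synchronous product of all $\mathbf{LOC}_{\alpha,p}$ (over $p$ with $\alpha\in\Sigma_p$) and all $\mathbf{LOC}_{\alpha,q}$ (over $q$ with $\alpha\in\Sigma_q$). If there are none, $\mathbf{LOC}_\alpha$ is the one-state marked generator over $\{\alpha\}$ with an $\alpha$-selfloop. Let $P_\alpha:\Sigma^*\to\Sigma_\alpha^*$ be the natural projection, and set $$L_m(\mathbf{LOC})=\bigcap_{\alpha\in\Sigma_c}P_\alpha^{-1}L_m(\mathbf{LOC}_\alpha),\qquad L(\mathbf{LOC})=\bigcap_{\alpha\in\Sigma_c}P_\alpha^{-1}L(\mathbf{LOC}_\alpha).$$ Then each $\mathbf{LOC}_\alpha$ is a partial-observation local controller for $\alpha$, and $$L_m(\mathbf G)\cap L_m(\mathbf{LOC})\subseteq L_m(\mathbf G)\cap P_e^{-1}E,$$ $$L(\mathbf G)\cap L(\mathbf{LOC})=\overline{L_m(\mathbf G)\cap L_m(\mathbf{LOC})}.$$ Moreover, $L(\mathbf G)\cap L(\mathbf{LOC})=L(\mathbf{SYS})$ and $L_m(\mathbf G)\cap L_m(\mathbf{LOC})=L_m(\mathbf{SYS})$.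
   Context: Generators and languages. A generator $\mathbf G=(Q,\Sigma,\delta,q_0,Q_m)$ is a finite automaton with partial transition function $\delta$. Its closed behavior is $L(\mathbf G)=\{s\in\Sigma^*:\delta(q_0,s)\text{ defined}\}$ and its marked behavior is $L_m(\mathbf G)=\{s\in L(\mathbf G):\delta(q_0,s)\in Q_m\}$. An overbar denotes prefix closure. Projections and synchronous product. For $\Sigma'\subseteq\Sigma$, the natural projection $\Sigma^*\to\Sigma'^*$ erases the events not in $\Sigma'$, and $P^{-1}$ denotes its inverse image. The synchronous product of languages $L_i\subseteq\Sigma_i^*$ is $\bigcap_i P_i^{-1}L_i$ over $\bigcup_i\Sigma_i$. The synchronous product of generators is the generator realizing the synchronous product of both closed and marked behaviors. Controllability. $\Sigma_c$ and $\Sigma_{uc}$ are the controllable and uncontrollable events. A language $K\subseteq L_m(\mathbf G)$ is controllable if $\overline K\Sigma_{uc}\cap L(\mathbf G)\subseteq\overline K$. Relative observability. $\Sigma_o$ and $\Sigma_{uo}$ are the observable and unobservable events, and $P:\Sigma^*\to\Sigma_o^*$ is the natural projection. Given $C\subseteq L_m(\mathbf G)$, a language $K\subseteq C$ is $C$-observable if, for all $s,s'$ with $P(s)=P(s')$, both of the following hold: (i) for all $\sigma\in\Sigma$: if $s\sigma\in\overline K$, $s'\in\overline C$ and $s'\sigma\in L(\mathbf G)$, then $s'\sigma\in\overline K$; (ii) if $s\in K$ and $s'\in\overline C\cap L_m(\mathbf G)$, then $s'\in K$. $\sup\mathcal{CO}(F)$ denotes the supremal controllable and $C$-observable sublanguage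 of $F$. Local controllers. A partial-observation local controller for $\alpha\in\Sigma_c$ is a generator $\mathbf{LOC}_\alpha=(Y_\alpha,\Sigma_\alpha,\eta_\alpha,y_{0,\alpha},Y_{m,\alpha})$ satisfying: (i) $\Sigma_\alpha\subseteq\Sigma_o\cup\{\alpha\}$, and it enables/disables only $\alpha$; (ii) every transition labelled by an unobservable event is a selfloop, i.e. for all $y$ and all $\sigma\in\Sigma_{uo}$, if $\eta_\alpha(y,\sigma)$ is defined then $\eta_\alpha(y,\sigma)=y$. *)

(* Defs.v *)
From mathcomp Require Import all_boot.
Set Implicit Arguments. Unset Strict Implicit. Unset Printing Implicit Defensive.

Section Defs.
Variable S : finType.

Definition lang := seq S -> Prop.

(* A generator: finite state set, alphabet, partial transition function,
   initial state, marker states. Transitions on events outside the alphabet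
   are ignored (see [step]). *)
Record gen := Gen {
  gst : finType;
  galph : {set S};
  gdelta : gst -> S -> option gst;
  ginit : gst;
  gmark : {set gst} }.

Definition step (G : gen) (q : gst G) (a : S) : option (gst G) :=
  if a \in galph G then gdelta q a else None.

Definition run (G : gen) (q : gst G) (s : seq S) : option (gst G) :=
  foldl (fun oq a => obind (fun q' => step q' a) oq) (Some q) s.

Definition Lgen (G : gen) : lang := fun s => isSome (run (ginit G) s).
Definition Lmgen (G : gen) : lang :=
  fun s => if run (ginit G) s is Some q then q \in gmark G else false.

Definition proj (A : {set S}) (s : seq S) : seq S := [seq x <- s | x \in A].

Definition word_over (A : {set S}) (s : seq S) : Prop := all (fun x => x \in A) s.

Definition pclos (K : lang) : lang := fun s => exists t, K (s ++ t).

(* synchronous product of a (filtered) finite family of languages L i over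
   alphabets A i : the intersection of inverse projections, over the union
   of the alphabets *)
Definition syncL (I : finType) (sel : pred I) (A : I -> {set S})
  (L : I -> lang) : lang :=
  fun s => word_over (\bigcup_(i | sel i) A i) s /\
           forall i, sel i -> L i (proj (A i) s).

Definition sync2L (A1 : {set S}) (L1 : lang) (A2 : {set S}) (L2 : lang) : lang :=
  fun s => word_over (A1 :|: A2) s /\ L1 (proj A1 s) /\ L2 (proj A2 s).

Definition controllable (Lg Lmg : lang) (Sc : {set S}) (K : lang) : Prop :=
  (forall s, K s -> Lmg s) /\
  forall s a, pclos K s -> a \notin Sc -> Lg (rcons s a) ->
              pclos K (rcons s a).

Definition relobs (Lg Lmg : lang) (So : {set S}) (C K : lang) : Prop :=
  (forall s, K s -> C s) /\
  forall s s', proj So s = proj So s' ->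
    (forall a, pclos K (rcons s a) -> pclos C s' -> Lg (rcons s' a) ->
               pclos K (rcons s' a)) /\
    (K s -> pclos C s' -> Lmg s' -> K s').

Definition supCO (Lg Lmg : lang) (Sc So : {set S}) (F : lang) : lang :=
  fun s => exists K : lang, (forall t, K t -> F t) /\
    controllable Lg Lmg Sc K /\ relobs Lg Lmg So F K /\ K s.

Definition is_loc (So : {set S}) (alpha : S) (G : gen) : Prop :=
  galph G \subset So :|: [set alpha] /\
  forall (y y' : gst G) a, a \notin So -> step y a = Some y' -> y' = y.

Definition sync2g (G1 G2 : gen) : gen :=
  @Gen (gst G1 * gst G2)%type (galph G1 :|: galph G2)
    (fun x a =>
       match a \in galph G1, a \in galph G2 with
       | true, true => obind (fun y1 => omap (fun y2 => (y1, y2)) (step x.2 a))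
                             (step x.1 a)
       | true, false => omap (fun y1 => (y1, x.2)) (step x.1 a)
       | false, true => omap (fun y2 => (x.1, y2)) (step x.2 a)
       | false, false => None
       end)
    (ginit G1, ginit G2)
    [set x | (x.1 \in gmark G1) && (x.2 \in gmark G2)].

Definition selfloop_gen (alpha : S) : gen :=
  @Gen unit [set alpha] (fun _ a => if a == alpha then Some tt else None)
    tt setT.

Definition syncl_gen (alpha : S) (l : seq gen) : gen :=
  match l with
  | [::] => selfloop_gen alpha
  | G :: Gs => foldl sync2g G Gs
  end.

Variables (IK IP IQ : finType).

Definition relevant (Gk : IK -> gen) (Se : IP -> {set S}) (p : IP) (k : IK) : bool :=
  galph (Gk k) :&: Se p != set0.

Definition alphP (Gk : IK -> gen) (Se : IP -> {set S}) (p : IP) : {set S} :=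
  \bigcup_(k | relevant Gk Se p k) galph (Gk k).

Definition LGp (Gk : IK -> gen) (Se : IP -> {set S}) (p : IP) : lang :=
  syncL (relevant Gk Se p) (fun k => galph (Gk k)) (fun k => Lgen (Gk k)).
Definition LmGp (Gk : IK -> gen) (Se : IP -> {set S}) (p : IP) : lang :=
  syncL (relevant Gk Se p) (fun k => galph (Gk k)) (fun k => Lmgen (Gk k)).

Definition LG (Gk : IK -> gen) : lang :=
  syncL predT (fun k => galph (Gk k)) (fun k => Lgen (Gk k)).
Definition LmG (Gk : IK -> gen) : lang :=
  syncL predT (fun k => galph (Gk k)) (fun k => Lmgen (Gk k)).

Definition PeInvE (Se : IP -> {set S}) (E : IP -> lang) : lang :=
  fun s => syncL predT Se E (proj (\bigcup_p Se p) s).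

Definition LSYS (Gk : IK -> gen) (Se : IP -> {set S}) (SUP : IP -> gen)
  (CO : IQ -> gen) : lang :=
  fun s => LG Gk s /\ (forall p, Lgen (SUP p) (proj (alphP Gk Se p) s)) /\
           (forall q, Lgen (CO q) (proj (galph (CO q)) s)).
Definition LmSYS (Gk : IK -> gen) (Se : IP -> {set S}) (SUP : IP -> gen)
  (CO : IQ -> gen) : lang :=
  fun s => LmG Gk s /\ (forall p, Lmgen (SUP p) (proj (alphP Gk Se p) s)) /\
           (forall q, Lmgen (CO q) (proj (galph (CO q)) s)).

Definition LOCa (Gk : IK -> gen) (Se : IP -> {set S}) (CO : IQ -> gen)
  (LOCp : IP -> S -> gen) (LOCq : IQ -> S -> gen) (alpha : S) : gen :=
  syncl_gen alpha
    ([seq LOCp p alpha | p <- enum IP & alpha \in alphP Gk Se p] ++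
     [seq LOCq q alpha | q <- enum IQ & alpha \in galph (CO q)]).

Definition LLOC Gk Se CO LOCp LOCq (Sc : {set S}) : lang :=
  fun s => forall alpha, alpha \in Sc ->
    Lgen (LOCa Gk Se CO LOCp LOCq alpha)
         (proj (galph (LOCa Gk Se CO LOCp LOCq alpha)) s).
Definition LmLOC Gk Se CO LOCp LOCq (Sc : {set S}) : lang :=
  fun s => forall alpha, alpha \in Sc ->
    Lmgen (LOCa Gk Se CO LOCp LOCq alpha)
          (proj (galph (LOCa Gk Se CO LOCp LOCq alpha)) s).

End Defs.

(* Main.v *)
Require Import Defs.
From mathcomp Require Import all_boot.
Set Implicit Arguments. Unset Strict Implicit. Unset Printing Implicit Defensive.

Set Implicit Arguments. Unset Strict Implicit. Unset Printing Implicit Defensive.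

Section H.
Variable S : finType.

Lemma proj_proj (A B : {set S}) s : A \subset B -> proj A (proj B s) = proj A s.
Proof.
move=> AB; rewrite /proj -filter_predI; apply: eq_filter => x /=.
by case xA: (x \in A) => //=; rewrite (subsetP AB _ xA).
Qed.

Lemma word_over_proj (A : {set S}) s : word_over A (proj A s).
Proof. exact: filter_all. Qed.

Lemma foldl_None (G : gen S) s :
  foldl (fun oq a => obind (fun q' => step q' a) oq) (@None (gst G)) s = None.
Proof. by elim: s. Qed.

Lemma runE (G : gen S) (q : gst G) a s :
  run q (a :: s) = obind (fun q' => run q' s) (step q a).
Proof. rewrite /run /=; case: (step q a) => [q'|] //=; exact: foldl_None. Qed.

Definition opair (T1 T2 : Type) (o1 : option T1) (o2 : option T2) :=
  obind (fun y1 => omap (fun y2 => (y1, y2)) o2) o1.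

Lemma run_sync (G1 G2 : gen S) s (x1 : gst G1) (x2 : gst G2) :
  word_over (galph G1 :|: galph G2) s ->
  @run _ (sync2g G1 G2) (x1, x2) s =
  opair (run x1 (proj (galph G1) s)) (run x2 (proj (galph G2) s)).
Proof.
elim: s x1 x2 => [|a s IH] x1 x2 /=; first by [].
move=> /andP [aU ws].
rewrite runE /proj /=.
have -> : step (G:=sync2g G1 G2) (x1, x2) a =
  match a \in galph G1, a \in galph G2 with
       | true, true => obind (fun y1 => omap (fun y2 => (y1, y2)) (step x2 a))
                             (step x1 a)
       | true, false => omap (fun y1 => (y1, x2)) (step x1 a)
       | false, true => omap (fun y2 => (x1, y2)) (step x2 a)
       | false, false => None
       end by rewrite /step /= aU.
move: aU; rewrite inE.
case A1: (a \in galph G1); case A2: (a \in galph G2) => //= _;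
  rewrite ?runE.
- case: (step x1 a) => [y1|] //=; case: (step x2 a) => [y2|] //=.
  + by rewrite IH.
  + by rewrite /opair /=; case: (run y1 _).
- case: (step x1 a) => [y1|] //=. by rewrite IH.
- case: (step x2 a) => [y2|] //=; first by rewrite IH.
  by rewrite /opair /=; case: (run x1 _).
Qed.

Lemma Lgen_sync (G1 G2 : gen S) s :
  Lgen (sync2g G1 G2) (proj (galph G1 :|: galph G2) s) <->
  Lgen G1 (proj (galph G1) s) /\ Lgen G2 (proj (galph G2) s).
Proof.
rewrite /Lgen /= run_sync; last exact: word_over_proj.
rewrite !proj_proj ?subsetUl ?subsetUr //.
rewrite /opair; case: (run _ _) => [y1|] /=; case: (run _ _) => [y2|] /=;
  by split => // -[].
Qed.

Lemma Lmgen_sync (G1 G2 : gen S) s :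
  Lmgen (sync2g G1 G2) (proj (galph G1 :|: galph G2) s) <->
  Lmgen G1 (proj (galph G1) s) /\ Lmgen G2 (proj (galph G2) s).
Proof.
rewrite /Lmgen /= run_sync; last exact: word_over_proj.
rewrite !proj_proj ?subsetUl ?subsetUr //.
rewrite /opair; case: (run _ _) => [y1|] /=; case: (run _ _) => [y2|] /=;
  rewrite ?inE /=; try (by split => // -[]).
by split => [/andP[]|[-> ->]].
Qed.

Definition allg (Q : gen S -> Prop) (l : seq (gen S)) : Prop :=
  foldr (fun H acc => Q H /\ acc) True l.

Lemma allg_cat Q l1 l2 : allg Q (l1 ++ l2) <-> allg Q l1 /\ allg Q l2.
Proof. elim: l1 => [|H l IH] /=; first by tauto. move: IH; tauto. Qed.

Lemma allg_map_filter (I : eqType) Q (f : I -> gen S) (P : pred I) l :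
  allg Q (map f (filter P l)) <-> forall i, i \in l -> P i -> Q (f i).
Proof.
elim: l => [|i l IH] /=; first by split.
case Pi: (P i) => /=; move: IH => [IH1 IH2]; split.
- move=> [Qi /IH1 H] j; rewrite inE => /orP [/eqP ->|jl] //; exact: H.
- move=> H; split; first exact: H (mem_head _ _) Pi.
  by apply: IH2 => j jl; apply: H; rewrite inE jl orbT.
- move=> /IH1 H j; rewrite inE => /orP [/eqP ->|jl]; [by rewrite Pi|exact: H].
- by move=> H; apply: IH2 => j jl; apply: H; rewrite inE jl orbT.
Qed.

Lemma foldl_sync (X : gen S -> seq S -> Prop) :
  (forall G1 G2 s, X (sync2g G1 G2) (proj (galph G1 :|: galph G2) s) <->
     X G1 (proj (galph G1) s) /\ X G2 (proj (galph G2) s)) ->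
  forall Gs G s, X (foldl (@sync2g S) G Gs) (proj (galph (foldl (@sync2g S) G Gs)) s) <->
    allg (fun H => X H (proj (galph H) s)) (G :: Gs).
Proof.
move=> HX; elim=> [|H Gs IH] G s /=; first by tauto.
move: (IH (sync2g G H) s) (HX G H s) => /=; tauto.
Qed.

Lemma run_self (a : S) t : word_over [set a] t -> @run _ (selfloop_gen a) tt t = Some tt.
Proof.
elim: t => //= b t IH /andP [bA wt].
rewrite runE /step /= bA; move: bA; rewrite inE => ->; exact: IH.
Qed.

Lemma syncl_iff (X : gen S -> seq S -> Prop) a l s :
  (forall G1 G2 s, X (sync2g G1 G2) (proj (galph G1 :|: galph G2) s) <->
     X G1 (proj (galph G1) s) /\ X G2 (proj (galph G2) s)) ->
  X (selfloop_gen a) (proj [set a] s) ->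
  X (syncl_gen a l) (proj (galph (syncl_gen a l)) s) <->
  allg (fun H => X H (proj (galph H) s)) l.
Proof.
move=> HX Hs; case: l => [|G Gs] /=; first by split.
exact: foldl_sync.
Qed.

Lemma Lgen_self (a : S) s : Lgen (selfloop_gen a) (proj [set a] s).
Proof. by rewrite /Lgen run_self //; apply: word_over_proj. Qed.
Lemma Lmgen_self (a : S) s : Lmgen (selfloop_gen a) (proj [set a] s).
Proof. by rewrite /Lmgen run_self ?inE //; apply: word_over_proj. Qed.

Lemma is_loc_sync (So : {set S}) (a : S) (G1 G2 : gen S) :
  is_loc So a G1 -> is_loc So a G2 -> is_loc So a (sync2g G1 G2).
Proof.
move=> [s1 h1] [s2 h2]; split; first by rewrite subUset s1 s2.
move=> [y1 y2] [y1' y2'] b bSo.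
rewrite {1}/step /= inE.
case A1: (b \in galph G1); case A2: (b \in galph G2) => //=.
- case E1: (step y1 b) => [z1|] //=; case E2: (step y2 b) => [z2|] //= [<- <-].
  by rewrite (h1 _ _ _ bSo E1) (h2 _ _ _ bSo E2).
- case E1: (step y1 b) => [z1|] //= [<- <-]. by rewrite (h1 _ _ _ bSo E1).
- case E2: (step y2 b) => [z2|] //= [<- <-]. by rewrite (h2 _ _ _ bSo E2).
Qed.

Lemma is_loc_syncl (So : {set S}) (a : S) l : allg (is_loc So a) l -> is_loc So a (syncl_gen a l).
Proof.
case: l => [|G Gs] /=.
  move=> _; split; first exact: subsetUr.
  by move=> [] [].
elim: Gs G => [|H Gs IH] G /=; first by case.
move=> [iG [iH rest]]; apply: IH => /=; split => //; exact: is_loc_sync.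
Qed.

End H.

Lemma setI_in (T : finType) (A B : {set T}) x : x \in A -> x \in B -> x \in A :&: B.
Proof. by move=> *; rewrite inE; apply/andP. Qed.

Theorem theorem1 (S : finType) (Sc So : {set S})
  (IK : finType) (Gk : IK -> gen S)
  (IP : finType) (Se : IP -> {set S}) (E : IP -> lang S)
  (SUP : IP -> gen S)
  (IQ : finType) (CO : IQ -> gen S)
  (LOCp : IP -> S -> gen S) (LOCq : IQ -> S -> gen S) :
  (* Sigma_p contains Sigma_{e,p}; E_p is a language over Sigma_{e,p} *)
  (forall p, Se p \subset alphP Gk Se p) ->
  (forall p s, E p s -> word_over (Se p) s) ->
  (* every component is relevant to some specification *)
  (forall k, exists p, relevant Gk Se p k) ->
  (* (H1) decentralized supervisors *)
  (forall p, galph (SUP p) = alphP Gk Se p) ->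
  (forall p,
     let Kp := supCO (LGp Gk Se p) (LmGp Gk Se p) Sc So
                 (sync2L (Se p) (E p) (alphP Gk Se p) (LmGp Gk Se p)) in
     (forall s, LmGp Gk Se p s /\ Lmgen (SUP p) s <-> Kp s) /\
     (forall s, LGp Gk Se p s /\ Lgen (SUP p) s <-> pclos Kp s)) ->
  (* (H2) coordinators: nonblocking *)
  (forall s, LSYS Gk Se SUP CO s <-> pclos (LmSYS Gk Se SUP CO) s) ->
  (* (H3) local controllers for the supervisors *)
  (forall p alpha, alpha \in Sc :&: alphP Gk Se p ->
     is_loc So alpha (LOCp p alpha) /\
     galph (LOCp p alpha) \subset alphP Gk Se p) ->
  (forall p s,
     (LGp Gk Se p s /\ forall alpha, alpha \in Sc :&: alphP Gk Se p ->
        Lgen (LOCp p alpha) (proj (galph (LOCp p alpha)) s)) <->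
     (LGp Gk Se p s /\ Lgen (SUP p) s)) ->
  (forall p s,
     (LmGp Gk Se p s /\ forall alpha, alpha \in Sc :&: alphP Gk Se p ->
        Lmgen (LOCp p alpha) (proj (galph (LOCp p alpha)) s)) <->
     (LmGp Gk Se p s /\ Lmgen (SUP p) s)) ->
  (* (H3) local controllers for the coordinators *)
  (forall q alpha, alpha \in Sc :&: galph (CO q) ->
     is_loc So alpha (LOCq q alpha) /\
     galph (LOCq q alpha) \subset galph (CO q)) ->
  (forall q s,
     (LG Gk s /\ forall alpha, alpha \in Sc :&: galph (CO q) ->
        Lgen (LOCq q alpha) (proj (galph (LOCq q alpha)) s)) <->
     (LG Gk s /\ Lgen (CO q) (proj (galph (CO q)) s))) ->
  (forall q s,
     (LmG Gk s /\ forall alpha, alpha \in Sc :&: galph (CO q) ->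
        Lmgen (LOCq q alpha) (proj (galph (LOCq q alpha)) s)) <->
     (LmG Gk s /\ Lmgen (CO q) (proj (galph (CO q)) s))) ->
  (* conclusions *)
  (forall alpha, alpha \in Sc -> is_loc So alpha (LOCa Gk Se CO LOCp LOCq alpha)) /\
  (forall s, LmG Gk s /\ LmLOC Gk Se CO LOCp LOCq Sc s ->
             LmG Gk s /\ PeInvE Se E s) /\
  (forall s, LG Gk s /\ LLOC Gk Se CO LOCp LOCq Sc s <->
             pclos (fun t => LmG Gk t /\ LmLOC Gk Se CO LOCp LOCq Sc t) s) /\
  (forall s, LG Gk s /\ LLOC Gk Se CO LOCp LOCq Sc s <-> LSYS Gk Se SUP CO s) /\
  (forall s, LmG Gk s /\ LmLOC Gk Se CO LOCp LOCq Sc s <-> LmSYS Gk Se SUP CO s).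
Proof.
move=> Hse Hew Hrel Hsup H1 H2 Hlocp HLp HLmp Hlocq HLq HLmq.
have LGp_of : forall p s, LG Gk s -> LGp Gk Se p (proj (alphP Gk Se p) s).
  move=> p s [_ H]; split; first exact: word_over_proj.
  move=> k rk; rewrite proj_proj; first exact: H.
  by rewrite /alphP; apply: (bigcup_sup k rk).
have LmGp_of : forall p s, LmG Gk s -> LmGp Gk Se p (proj (alphP Gk Se p) s).
  move=> p s [_ H]; split; first exact: word_over_proj.
  move=> k rk; rewrite proj_proj; first exact: H.
  by rewrite /alphP; apply: (bigcup_sup k rk).
have LOCiff : forall X : gen S -> seq S -> Prop,
  (forall G1 G2 s, X (sync2g G1 G2) (proj (galph G1 :|: galph G2) s) <->
     X G1 (proj (galph G1) s) /\ X G2 (proj (galph G2) s)) ->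
  (forall a s, X (selfloop_gen a) (proj [set a] s)) ->
  forall a s, X (LOCa Gk Se CO LOCp LOCq a) (proj (galph (LOCa Gk Se CO LOCp LOCq a)) s) <->
    (forall p, a \in alphP Gk Se p -> X (LOCp p a) (proj (galph (LOCp p a)) s)) /\
    (forall q, a \in galph (CO q) -> X (LOCq q a) (proj (galph (LOCq q a)) s)).
  move=> X h1 h2 a s; rewrite /LOCa.
  move: (syncl_iff ([seq LOCp p a | p <- enum IP & a \in alphP Gk Se p] ++
     [seq LOCq q a | q <- enum IQ & a \in galph (CO q)]) h1 (h2 a s)) => [E1 E2].
  move: (allg_cat (fun H => X H (proj (galph H) s))
     [seq LOCp p a | p <- enum IP & a \in alphP Gk Se p]
     [seq LOCq q a | q <- enum IQ & a \in galph (CO q)]) => [C1 C2].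
  move: (allg_map_filter (fun H => X H (proj (galph H) s)) (LOCp^~ a)
     (fun p => a \in alphP Gk Se p) (enum IP)) => [M1 M2].
  move: (allg_map_filter (fun H => X H (proj (galph H) s)) (LOCq^~ a)
     (fun q => a \in galph (CO q)) (enum IQ)) => [N1 N2].
  split.
  - move=> /E1 /C1 [/M1 A /N1 B]; split => [p|q]; [apply: A|apply: B]; by rewrite mem_enum.
  - move=> [A B]; apply: E2; apply: C2; split; [apply: M2|apply: N2] => i _; [apply: A|apply: B].
have LOCL := LOCiff _ (@Lgen_sync S) (@Lgen_self S).
have LOCLm := LOCiff _ (@Lmgen_sync S) (@Lmgen_self S).
have L4 : forall s, LG Gk s /\ LLOC Gk Se CO LOCp LOCq Sc s <-> LSYS Gk Se SUP CO s.
  move=> s; split.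
  - move=> [HG HL]; split; [done|split].
    + move=> p; have [h _] := HLp p (proj (alphP Gk Se p) s).
      apply: (proj2 (h _)); split; first exact: LGp_of.
      move=> a /setIP [aSc aP]; rewrite proj_proj; last first.
        by have [_ ->] := Hlocp p a (setI_in aSc aP).
      by have [A _] := proj1 (LOCL a s) (HL a aSc); apply: A.
    + move=> q; have [h _] := HLq q s.
      apply: (proj2 (h _)); split => // a /setIP [aSc aP].
      by have [_ A] := proj1 (LOCL a s) (HL a aSc); apply: A.
  - move=> [HG [HS HC]]; split => // a aSc; apply/LOCL; split.
    + move=> p aP; have [_ h] := HLp p (proj (alphP Gk Se p) s).
      have [_ H] := h (conj (LGp_of p s HG) (HS p)).
      have := H a (setI_in aSc aP); rewrite proj_proj //.
      by have [_ ->] := Hlocp p a (setI_in aSc aP).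
    + move=> q aP; have [_ h] := HLq q s.
      have [_ H] := h (conj HG (HC q)).
      exact: H a (setI_in aSc aP).
have L5 : forall s, LmG Gk s /\ LmLOC Gk Se CO LOCp LOCq Sc s <-> LmSYS Gk Se SUP CO s.
  move=> s; split.
  - move=> [HG HL]; split; [done|split].
    + move=> p; have [h _] := HLmp p (proj (alphP Gk Se p) s).
      apply: (proj2 (h _)); split; first exact: LmGp_of.
      move=> a /setIP [aSc aP]; rewrite proj_proj; last first.
        by have [_ ->] := Hlocp p a (setI_in aSc aP).
      by have [A _] := proj1 (LOCLm a s) (HL a aSc); apply: A.
    + move=> q; have [h _] := HLmq q s.
      apply: (proj2 (h _)); split => // a /setIP [aSc aP].
      by have [_ A] := proj1 (LOCLm a s) (HL a aSc); apply: A.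
  - move=> [HG [HS HC]]; split => // a aSc; apply/LOCLm; split.
    + move=> p aP; have [_ h] := HLmp p (proj (alphP Gk Se p) s).
      have [_ H] := h (conj (LmGp_of p s HG) (HS p)).
      have := H a (setI_in aSc aP); rewrite proj_proj //.
      by have [_ ->] := Hlocp p a (setI_in aSc aP).
    + move=> q aP; have [_ h] := HLmq q s.
      have [_ H] := h (conj HG (HC q)).
      exact: H a (setI_in aSc aP).
split.
  move=> a aSc; apply: is_loc_syncl; rewrite /LOCa.
  apply/allg_cat; split; apply/allg_map_filter => i _ iA.
  - by have [] := Hlocp i a (setI_in aSc iA).
  - by have [] := Hlocq i a (setI_in aSc iA).
split.
  move=> s /L5 [HG [HS _]]; split => //; split; first exact: word_over_proj.
  move=> p _; rewrite proj_proj; last exact: (bigcup_sup p).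
  have [K1 _] := H1 p; simpl in K1.
  have [K [KF [_ [_ Kt]]]] := proj1 (K1 _) (conj (LmGp_of p s HG) (HS p)).
  have [_ [+ _]] := KF _ Kt.
  by rewrite proj_proj.
split.
  move=> s; split.
  - move=> /L4 /H2 [t Ht]; exists t; exact/L5.
  - move=> [t /L5 Ht]; apply/L4/H2; by exists t.
by split.
Qed.
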